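(* Let $n,r\ge1$, let $D=\{(\mathbf s_1,\mathbf t_1),\dots,(\mathbf s_r,\mathbf t_r)\}\subset\mathbb F_2^n\times\mathbb F_2^n$, fix $i\in\{1,\dots,n\}$, and let $f_i$, $p$, $I=\langle p\rangle$, $W_S$ and $$\Phi:\overline{\mathbb F}_2[\{c_S:S\subseteq[n]\}]\to\overline{\mathbb F}_2[\{b_H:H\subseteq[n]\}],\quad c_S\mapsto W_S,$$ be as follows: $f_i=\sum_{j=1}^r t_{j,i}\prod_{e=1}^n(1-(x_e-s_{j,e}))$, $p=\prod_{j=1}^r\bigl(1-\prod_{e=1}^n(1-(x_e-s_{j,e}))\bigr)$, and $W_S$ is the coefficient of $\prod_{l\in S}x_l$ in the reduction modulo $\langle x_e^2-x_e\rangle$ of $f_i+\bigl(\sum_{H\subseteq[n]}b_H\prod_{l\in H}x_l\bigr)p$. Let $\mathbb I(V^{ncf})=\bigcap_\sigma I_\sigma$ (intersection over all permutations $\sigma$ of $[n]$), where $$I_\sigma=\Bigl\langle c_{[n]}-1,\; c_S-c_{[r_S^\sigma]}\prod_{\sigma(k)\in[r_S^\sigma]\setminus S}c_{[n]\setminus\{\sigma(k)\}}\;:\;S\subsetneq[n]\Bigr\rangle\subseteq\overline{\mathbb F}_2[\{c_S:S\subseteq[n]\}].$$ Then the ideal of all nested canalyzing functions that fit the data set $D$ is $\mathbb I(V^{ncf})+\ker(\Phi)$; that is, the $\mathbb F_2$-rational points of $\mathbb V(\mathbb I(V^{ncf})+\ker\Phi)$, identified with Boolean polynomials via $(c_S)\leftrightarrow\sum_S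 c_S\prod_{l\in S}x_l$, are exactly the nested canalyzing functions $h$ on $n$ variables with $h(\mathbf s_j)=t_{j,i}$ for $j=1,\dots,r$.
   Context: Boolean functions $\mathbb F_2^n\to\mathbb F_2$ are identified with elements $\sum_{S\subseteq[n]}c_S\prod_{l\in S}x_l$ of $\mathbb F_2[x_1,\dots,x_n]/\langle x_e^2-x_e\rangle$ and with coefficient vectors $(c_S)\in\mathbb F_2^{2^n}$; $[n]=\{1,\dots,n\}$. A function ''on $n$ variables'' depends on each variable. A Boolean function $h$ on $n$ variables is nested canalyzing if there exist a permutation $\sigma$ of $[n]$ and $a_1,\dots,a_n,b_1,\dots,b_n\in\mathbb F_2$ such that $h(x)=b_k$ whenever $x_{\sigma(1)}\ne a_1,\dots,x_{\sigma(k-1)}\ne a_{k-1}$ and $x_{\sigma(k)}=a_k$ ($k=1,\dots,n$), and $h(x)=\overline{b_n}=1+b_n$ when $x_{\sigma(k)}\ne a_k$ for all $k$. For a permutation $\sigma$, the order $<_\sigma$ on $[n]$ is $\sigma(k)<_\sigma\sigma(l)\iff k<l$; for nonempty $S\subseteq[n]$, $r_S^\sigma$ denotes the index $m$ such that $\sigma(m)$ is the $<_\sigma$-largest element of $S$, and $[r_S^\sigma]=\{\sigma(1),\dots,\sigma(r_S^\sigma)\}$ (for $S=\emptyset$ the completion is empty). $V^{ncf}\subseteq\mathbb F_2^{2^n}$ denotes the set of coefficient vectors of all nested canalyzing functions, $V^{ncf}=\bigcup_\sigma V_\sigma^{ncf}$ with $V_\sigma^{ncf}$ the vectors with $c_{[n]}=1$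 and $c_S=c_{[r_S^\sigma]}\prod_{\sigma(k)\in[r_S^\sigma]\setminus S}c_{[n]\setminus\{\sigma(k)\}}$; its ideal is $\bigcap_\sigma I_\sigma$. $\overline{\mathbb F}_2$ is the algebraic closure of $\mathbb F_2$. *)

(* Defs.v *)
From HB Require Import structures.
From mathcomp Require Import all_boot all_order all_algebra all_fingroup all_field.
From mathcomp Require Import mpoly.
Set Implicit Arguments. Unset Strict Implicit. Unset Printing Implicit Defensive.
Import GRing.Theory.
Local Open Scope ring_scope.

Definition F2bar : countClosedFieldType :=
  projT1 (countable_algebraic_closure 'F_2).

Definition bpoly_eval (n : nat) (c : {ffun {set 'I_n} -> bool}) (x : 'I_n -> bool) : bool :=
  \big[addb/false]_(S : {set 'I_n}) (c S && [forall l in S, x l]).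

Definition flip (n : nat) (x : 'I_n -> bool) (l : 'I_n) : 'I_n -> bool :=
  fun m => if m == l then ~~ x l else x m.

Definition on_all_vars (n : nat) (h : ('I_n -> bool) -> bool) : Prop :=
  forall l : 'I_n, exists x : 'I_n -> bool, h x != h (flip x l).

Definition nested_canalyzing (n : nat) (h : ('I_n -> bool) -> bool) : Prop :=
  on_all_vars h /\
  exists (sigma : {perm 'I_n}) (a b : 'I_n -> bool),
    forall x : 'I_n -> bool,
      (forall k : 'I_n,
          (forall k' : 'I_n, (k' < k)%N -> x (sigma k') != a k') ->
          x (sigma k) = a k -> h x = b k) /\
      ((forall k : 'I_n, x (sigma k) != a k) ->
          forall k : 'I_n, val k = n.-1 -> h x = ~~ b k).

Definition nsub (n : nat) : nat := #|{set 'I_n}|.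

(* ring F2bar[{c_S}] (also used for F2bar[{b_H}]) *)
Definition cring (n : nat) := {mpoly F2bar[nsub n]}.

Definition var (n : nat) (S : {set 'I_n}) : cring n := 'X_(enum_rank S).

(* [r_S^sigma] = {sigma(1),...,sigma(r_S^sigma)}; empty for S empty *)
Definition completion (n : nat) (sigma : {perm 'I_n}) (S : {set 'I_n}) : {set 'I_n} :=
  if S == set0 then set0
  else [set sigma k | k : 'I_n & (k <= \max_(l in S) val ((sigma^-1)%g l))%N].

Definition Isigma_gen (n : nat) (sigma : {perm 'I_n}) (S : {set 'I_n}) : cring n :=
  var S - var (completion sigma S) *
    \prod_(k : 'I_n | sigma k \in completion sigma S :\: S) var (setT :\ sigma k).

Definition in_Isigma (n : nat) (sigma : {perm 'I_n}) (q : cring n) : Prop :=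
  exists coef : option {set 'I_n} -> cring n,
    q = coef None * (var setT - 1) +
        \sum_(S : {set 'I_n} | S != setT) coef (Some S) * Isigma_gen sigma S.

Definition in_IVncf (n : nat) (q : cring n) : Prop :=
  forall sigma : {perm 'I_n}, in_Isigma sigma q.

(* polynomials in x_1..x_n with coefficients in F2bar[{b_H}] *)
Definition xring (n : nat) := {mpoly (cring n)[n]}.

Definition bit (R : nzRingType) (b : bool) : R := (b : nat)%:R.

Definition delta (n : nat) (s : 'I_n -> bool) : xring n :=
  \prod_(e < n) (1 - ('X_e - bit _ (s e))).

Definition f_data (n r : nat) (s : 'I_r -> 'I_n -> bool) (t : 'I_r -> 'I_n -> bool)
  (i : 'I_n) : xring n :=
  \sum_(j < r) bit _ (t j i) * delta (s j).

Definition p_data (n r : nat) (s : 'I_r -> 'I_n -> bool) : xring n :=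
  \prod_(j < r) (1 - delta (s j)).

Definition generic_b (n : nat) : xring n :=
  \sum_(H : {set 'I_n}) (var H)%:MP * \prod_(l in H) 'X_l.

(* coefficient of prod_{l in S} x_l in the reduction of P modulo <x_e^2 - x_e>:
   the reduction sends each monomial x^m to x^{supp m}. *)
Definition red_coef (n : nat) (S : {set 'I_n}) (P : xring n) : cring n :=
  \sum_(m <- msupp P | [set l | (m l != 0)%N] == S) P@_m.

Definition W_poly (n r : nat) (s t : 'I_r -> 'I_n -> bool) (i : 'I_n)
  (S : {set 'I_n}) : cring n :=
  red_coef S (f_data s t i + generic_b n * p_data s).

Definition Phi (n r : nat) (s t : 'I_r -> 'I_n -> bool) (i : 'I_n) (q : cring n)
  : cring n :=
  mmap (@mpolyC _ F2bar) (fun k : 'I_(nsub n) => W_poly s t i (enum_val k)) q.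

Definition in_J (n r : nat) (s t : 'I_r -> 'I_n -> bool) (i : 'I_n) (q : cring n)
  : Prop :=
  exists q1 q2 : cring n, q = q1 + q2 /\ in_IVncf q1 /\ Phi s t i q2 = 0.

(* F_2-rational point of the variety of an ideal, given by the coefficient
   vector c (embedded into F2bar via 0,1) *)
Definition F2_point_in_V (n : nat) (J : cring n -> Prop) (c : {ffun {set 'I_n} -> bool})
  : Prop :=
  forall q : cring n, J q -> q.@[fun k : 'I_(nsub n) => bit F2bar (c (enum_val k))] = 0.

(* Main.v *)
Require Import Defs.
From HB Require Import structures.
From mathcomp Require Import all_boot all_order all_algebra all_fingroup all_field.
From mathcomp Require Import mpoly.
From mathcomp Require Import zify.
From Stdlib Require Import FunctionalExtensionality.
Set Implicit Arguments. Unset Strict Implicit. Unset Printing Implicit Defensive.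
Import GRing.Theory.
Local Open Scope ring_scope.

Lemma F2bar_char2 : (2%:R : F2bar) = 0.
Proof.
rewrite /F2bar; case: (countable_algebraic_closure 'F_2) => K [f _] /=.
have h : (2%:R : 'F_2) = 0 by apply/eqP; rewrite -(dvdn_pcharf (pchar_Fp _)).
by rewrite -(rmorph_nat f 2) h rmorph0.
Qed.

Section Bits.
Context (R : comNzRingType) (h2 : (2%:R : R) = 0).

Lemma add_same (x : R) : x + x = 0.
Proof. by rewrite -mulr2n -mulr_natr h2 mulr0. Qed.

Lemma opp_char2 (x : R) : - x = x.
Proof. by apply/eqP; rewrite eq_sym -subr_eq0 opprK add_same. Qed.

Lemma bitT : bit R true = 1. Proof. by rewrite /bit /=. Qed.
Lemma bitF : bit R false = 0. Proof. by rewrite /bit /=. Qed.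

Lemma bit_addb a b : bit R (a (+) b) = bit R a + bit R b.
Proof. by case: a; case: b; rewrite /= ?bitT ?bitF ?addr0 ?add0r ?add_same. Qed.

Lemma bit_andb a b : bit R (a && b) = bit R a * bit R b.
Proof. by case: a; case: b; rewrite /= ?bitT ?bitF ?mulr0 ?mul0r ?mulr1. Qed.

Lemma bit_negb a : bit R (~~ a) = 1 + bit R a.
Proof. by case: a; rewrite /= ?bitT ?bitF ?addr0 ?add_same. Qed.

Lemma bit_inj : injective (bit R).
Proof.
by case; case=> //; rewrite ?bitT ?bitF => /eqP; rewrite ?oner_eq0 // eq_sym oner_eq0.
Qed.

Lemma bit_sum (I : finType) (P : pred I) (F : I -> bool) :
  bit R (\big[addb/false]_(i | P i) F i) = \sum_(i | P i) bit R (F i).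
Proof. by apply: (big_morph (bit R)) => [a b|]; rewrite ?bit_addb ?bitF. Qed.

Lemma bit_prod (I : finType) (P : pred I) (F : I -> bool) :
  \prod_(i | P i) bit R (F i) = bit R [forall (i | P i), F i].
Proof.
rewrite -big_andE; apply/esym; apply: (big_morph (bit R)) => [a b|];
  by rewrite ?bit_andb ?bitT.
Qed.

Lemma bit_prod_all (I : finType) (F : I -> bool) :
  \prod_i bit R (F i) = bit R [forall i, F i].
Proof. by rewrite (bit_prod predT). Qed.

Lemma bit_eq a b : 1 - (bit R a - bit R b) = bit R (a == b).
Proof. by case: a; case: b; rewrite /= ?bitT ?bitF ?subrr ?subr0 ?sub0r ?opp_char2 ?add_same ?addr0. Qed.

End Bits.
Section Sets.
Context (R : comNzRingType) (h2 : (2%:R : R) = 0) (n : nat).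
Implicit Types (S T : {set 'I_n}).

Lemma mobius0 (d : {set 'I_n} -> R) :
  (forall T, \sum_(S : {set 'I_n} | S \subset T) d S = 0) -> forall S, d S = 0.
Proof.
move=> H S; elim: {S}_.+1 {-2}S (ltnSn #|S|) => // k IH S hS.
have := H S; rewrite (bigD1 S) //= big1 ?addr0 // => S' /andP[sS' nS'].
rewrite ltnS in hS; apply: IH; apply: leq_trans hS; apply: proper_card.
by rewrite properEneq nS' sS'.
Qed.

Lemma mobius_uniq (a b : {set 'I_n} -> R) :
  (forall T, \sum_(S : {set 'I_n} | S \subset T) a S = \sum_(S : {set 'I_n} | S \subset T) b S) ->
  forall S, a S = b S.
Proof.
move=> H S; apply/eqP; rewrite -subr_eq0; apply/eqP.
apply: (@mobius0 (fun S => a S - b S) _ S) => T.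
by rewrite sumrB H subrr.
Qed.

Definition tog (l : 'I_n) T := if l \in T then T :\ l else l |: T.

Lemma togK l : involutive (tog l).
Proof.
move=> T; rewrite /tog; case lT: (l \in T); rewrite /= ?setD11 ?setU11 /=.
  by rewrite setD1K.
by rewrite setU1K // lT.
Qed.

Lemma in_tog l T : (l \in tog l T) = (l \notin T).
Proof. by rewrite /tog; case: ifP => lT; rewrite ?setD11 ?setU11. Qed.

Lemma in_tog_ne l T m : m != l -> (m \in tog l T) = (m \in T).
Proof. by move=> ml; rewrite /tog; case: ifP => _; rewrite ?in_setD1 ?in_setU1 (negbTE ml). Qed.

Lemma sum_pair l (P : pred {set 'I_n}) (F : {set 'I_n} -> R) :
  (forall T, P (tog l T) = P T) -> (forall T, F (tog l T) = F T) ->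
  \sum_(T : {set 'I_n} | P T) F T = 0.
Proof.
move=> HP HF; rewrite (bigID (fun T => l \in T)) /=.
rewrite [X in _ + X](reindex_inj (can_inj (togK l))) /=.
rewrite [X in _ + X](eq_bigl (fun T => P T && (l \in T))); last first.
  by move=> T; rewrite HP in_tog negbK.
rewrite [X in _ + X](eq_bigr F) ?add_same // => T _; exact: HF.
Qed.

Lemma count_sup S : \sum_(T : {set 'I_n} | S \subset T) (1 : R) = (S == setT)%:R.
Proof.
case: (eqVneq S setT) => [->|nS].
  rewrite (big_pred1 setT) //= => T; by rewrite subTset.
have [l lS] : exists l, l \notin S.
  case: (pickP (fun l => l \notin S)) => [l Hl|H]; first by exists l.
  by case/eqP: nS; apply/setP => l; rewrite inE; move: (H l) => /negbFE.
transitivity (0 : R); last by [].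
apply: (@sum_pair l (fun T => S \subset T) (fun _ => 1)) => // T.
apply/subsetP/subsetP => H m mS; have ml : m != l by apply: contraNneq lS => <-.
  by rewrite -(in_tog_ne T ml) H.
by rewrite (in_tog_ne T ml) H.
Qed.

Lemma bpoly_ext (c : {ffun {set 'I_n} -> bool}) (x y : 'I_n -> bool) :
  x =1 y -> bpoly_eval c x = bpoly_eval c y.
Proof.
move=> e; apply: eq_bigr => S _; congr andb; apply: eq_forallb => l; by rewrite e.
Qed.

Lemma bpoly_bit (c : {ffun {set 'I_n} -> bool}) (x : 'I_n -> bool) :
  bit R (bpoly_eval c x) = \sum_(S : {set 'I_n} | S \subset [set l | x l]) bit R (c S).
Proof.
rewrite /bpoly_eval (bit_sum h2) [RHS]big_mkcond /=; apply: eq_bigr => S _.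
rewrite bit_andb; case: (boolP (S \subset _)) => H.
  have -> : [forall l in S, x l].
    by apply/forall_inP => l /(subsetP H); rewrite inE.
  by rewrite bitT mulr1.
have -> : [forall l in S, x l] = false.
  apply/negbTE; apply: contra H => /forall_inP H; apply/subsetP => l /H; by rewrite inE.
by rewrite bitF mulr0.
Qed.

Lemma parity (c : {ffun {set 'I_n} -> bool}) :
  \sum_(T : {set 'I_n}) bit R (bpoly_eval c (fun l => l \in T)) = bit R (c setT).
Proof.
rewrite (eq_bigr (fun T => \sum_(S : {set 'I_n}) if S \subset T then bit R (c S) else 0)); last first.
  move=> T _; rewrite bpoly_bit big_mkcond; apply: eq_bigr => S _.
  by rewrite (_ : [set l | l \in T] = T) //; apply/setP => l; rewrite inE.
rewrite exchange_big /=.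
rewrite (eq_bigr (fun S => bit R (c S) * (S == setT)%:R)); last first.
  by move=> S _; rewrite -count_sup mulr_sumr [RHS]big_mkcond; apply: eq_bigr => T _; case: ifP; rewrite ?mulr1 ?mulr0.
rewrite (bigD1 setT) //= eqxx mulr1 big1 ?addr0 // => S /negbTE ->; by rewrite mulr0.
Qed.

Lemma flip_tog (x : 'I_n -> bool) l T : x =1 (fun m => m \in T) ->
  flip x l =1 (fun m => m \in tog l T).
Proof.
move=> e m; rewrite /flip; case: (eqVneq m l) => [->|ml]; first by rewrite in_tog e.
by rewrite in_tog_ne // e.
Qed.

Lemma all_vars (c : {ffun {set 'I_n} -> bool}) : c setT -> on_all_vars (bpoly_eval c).
Proof.
move=> cT l.
case: (boolP [exists T : {set 'I_n}, bpoly_eval c (fun m => m \in T) !=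
                         bpoly_eval c (flip (fun m => m \in T) l)]).
  by case/existsP => T HT; exists (fun m => m \in T).
rewrite negb_exists => /forallP H; exfalso.
have := parity c; rewrite cT bitT.
rewrite (@sum_pair l predT (fun T => bit R (bpoly_eval c (fun m => m \in T)))) //; first by move/eqP; rewrite eq_sym oner_eq0.
move=> T; congr (bit R _); have := H T; rewrite negbK => /eqP ->.
by apply: bpoly_ext => m; symmetry; apply: flip_tog.
Qed.

End Sets.

Definition goodb (R : nzRingType) (n : nat) (sigma : {perm 'I_n})
  (c : {ffun {set 'I_n} -> bool}) : bool :=
  c setT && [forall S : {set 'I_n}, (S != setT) ==>
    (bit R (c S) == bit R (c (completion sigma S)) *
       \prod_(k : 'I_n | sigma k \in completion sigma S :\: S) bit R (c (setT :\ sigma k)))].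

Section NCF.
Context (R : comNzRingType) (h2 : (2%:R : R) = 0) (n' : nat) (sigma : {perm 'I_n'.+1}).
Local Notation n := n'.+1.
Implicit Types (S T : {set 'I_n}).

Definition rk (l : 'I_n) : nat := (sigma^-1)%g l.
Definition pre (m : nat) : {set 'I_n} := [set l | (rk l <= m)%N].
Definition mx S := \max_(l in S) rk l.

Lemma rk_sigma (k : 'I_n) : rk (sigma k) = k.
Proof. by rewrite /rk permK. Qed.

Lemma in_pre (k : 'I_n) m : (sigma k \in pre m) = (k <= m)%N.
Proof. by rewrite inE rk_sigma. Qed.

Lemma rk_lt l : (rk l < n)%N. Proof. exact: ltn_ord. Qed.

Lemma mx_max S l : l \in S -> (rk l <= mx S)%N.
Proof. by move=> lS; apply: leq_bigmax_cond. Qed.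

Lemma mx_arg S : S != set0 -> exists2 l, l \in S & rk l = mx S.
Proof.
move=> nS; have : (0 < #|S|)%N by rewrite card_gt0.
by case/(eq_bigmax_cond rk) => l lS e; exists l.
Qed.

Lemma mx_le S : (mx S <= n')%N.
Proof. by apply/bigmax_leqP => l _; rewrite -ltnS rk_lt. Qed.

Lemma sub_pre S m : (S \subset pre m) = (mx S <= m)%N.
Proof.
apply/subsetP/bigmax_leqP => H l lS; first by have := H l lS; rewrite inE.
by rewrite inE H.
Qed.

Lemma completionE S : S != set0 -> completion sigma S = pre (mx S).
Proof.
move=> nS; rewrite /completion (negbTE nS); apply/setP => l; rewrite inE.
apply/imsetP/idP => [[k Hk ->]|H].
  by rewrite rk_sigma; move: Hk; rewrite inE.
exists ((sigma^-1)%g l); last by rewrite permKV.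
by rewrite inE.
Qed.

Lemma mx_pre m : (m <= n')%N -> mx (pre m) = m.
Proof.
move=> hm; apply/eqP; rewrite eqn_leq; apply/andP; split.
  by apply/bigmax_leqP => l; rewrite inE.
have hm' : (m < n)%N by [].
have := mx_max (l := sigma (inord m)) (S := pre m).
by rewrite in_pre rk_sigma inordK // leqnn; apply.
Qed.

Lemma pre_neq0 m : pre m != set0.
Proof. by apply/set0Pn; exists (sigma ord0); rewrite in_pre. Qed.

Lemma pre_top : pre n' = setT.
Proof. by apply/setP => l; rewrite !inE -ltnS rk_lt. Qed.

Definition G (beta A : nat -> R) m :=
  \sum_(k : 'I_n | (m <= k)%N) beta k * \prod_(j : 'I_n | (m < j <= k)%N) A j.

Definition ncfc (b0 : R) (beta A : nat -> R) S :=
  bit R (S == set0) * b0 +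
  \sum_(k : 'I_n) beta k * (bit R (S \subset pre k) *
      \prod_(j : 'I_n | (j <= k)%N && (sigma j \notin S)) A j).

Lemma ncfc_gen b0 beta A S : S != set0 ->
  ncfc b0 beta A S = G beta A (mx S) *
     \prod_(j : 'I_n | (j <= mx S)%N && (sigma j \notin S)) A j.
Proof.
move=> nS; rewrite /ncfc (negbTE nS) bitF mul0r add0r /G mulr_suml.
rewrite [RHS]big_mkcond /=; apply: eq_bigr => k _.
rewrite sub_pre; case: leqP => hk; rewrite ?bitT ?bitF ?mul0r ?mulr0 // mul1r -mulrA.
congr (_ * _).
rewrite (bigID (fun j : 'I_n => (j <= mx S)%N)) /= mulrC; congr (_ * _);
  apply: eq_bigl => j; case: (ltnP (mx S) j) => hj; case: (boolP (sigma j \in S)) => hs /=;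
  try (by have := mx_max hs; rewrite rk_sigma leqNgt hj);
  rewrite ?(leq_trans hj hk) ?andbT ?andbF ?hj //= ?andbT ?andbF //.
Qed.

Lemma G_top beta A : G beta A n' = beta n'.
Proof.
rewrite /G (big_pred1 ord_max) => [|k]; last first.
  by rewrite /= -val_eqE /=; have := ltn_ord k; lia.
rewrite big_pred0 ?mulr1 // => j; have := ltn_ord j; simpl; lia.
Qed.

Lemma G_rec beta A m : (m < n')%N -> G beta A m = beta m + A m.+1 * G beta A m.+1.
Proof.
move=> hm; rewrite /G (bigD1 (inord m)) /=; last by rewrite inordK //; lia.
rewrite inordK; last by lia.
rewrite big_pred0 ?mulr1; last by move=> j; lia.
congr (_ + _); rewrite mulr_sumr.
rewrite (eq_bigl (fun k : 'I_n => (m.+1 <= k)%N)); last first.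
  by move=> k; rewrite -val_eqE /= inordK; lia.
apply: eq_bigr => k hk.
rewrite (bigD1 (inord m.+1)) /=; last by rewrite inordK; lia.
rewrite inordK; last by lia.
rewrite mulrCA; congr (_ * (_ * _)).
by apply: eq_bigl => j; rewrite -val_eqE /= inordK; lia.
Qed.

Lemma ncfc_pre b0 beta A m : (m <= n')%N -> ncfc b0 beta A (pre m) = G beta A m.
Proof.
move=> hm; rewrite ncfc_gen ?pre_neq0 // mx_pre //.
by rewrite big_pred0 ?mulr1 // => j; rewrite in_pre; case: (j <= m)%N.
Qed.

Lemma mx_co (k : 'I_n) : (k < n')%N -> mx (setT :\ sigma k) = n'.
Proof.
move=> hk; apply/eqP; rewrite eqn_leq mx_le /=.
have := mx_max (l := sigma ord_max) (S := setT :\ sigma k); rewrite rk_sigma; apply.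
rewrite !inE andbT (inj_eq perm_inj) -val_eqE /=; lia.
Qed.

Lemma ncfc_co b0 beta A (k : 'I_n) : (k < n')%N ->
  ncfc b0 beta A (setT :\ sigma k) = beta n' * A k.
Proof.
move=> hk; rewrite ncfc_gen; last first.
  by apply/set0Pn; exists (sigma ord_max); rewrite !inE andbT (inj_eq perm_inj) -val_eqE /=; lia.
rewrite mx_co // G_top (big_pred1 k) // => j.
rewrite /= !inE andbT negbK (inj_eq perm_inj); have := ltn_ord j; case: (j == k); lia.
Qed.

Lemma ncfc_top b0 beta A : beta n' = 1 -> ncfc b0 beta A setT = 1.
Proof. by move=> e; rewrite -pre_top ncfc_pre // G_top. Qed.

Lemma ncfc_rec b0 beta A S : beta n' = 1 ->
  ncfc b0 beta A S = ncfc b0 beta A (completion sigma S) *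
    \prod_(k : 'I_n | sigma k \in completion sigma S :\: S) ncfc b0 beta A (setT :\ sigma k).
Proof.
move=> e; case: (eqVneq S set0) => [->|nS].
  by rewrite /completion eqxx big_pred0 ?mulr1 // => k; rewrite inE in_set0 andbF.
rewrite completionE // ncfc_gen // ncfc_pre ?mx_le //; congr (_ * _).
have [l0 l0S e0] := mx_arg nS.
apply: eq_big => k; first by rewrite !inE -/(rk _) rk_sigma andbC.
move=> /andP[hk kS].
rewrite ncfc_co ?e ?mul1r //.
have : k != n' :> nat.
  apply/eqP => ek; move: kS; apply/negP; rewrite negbK.
  have -> : sigma k = l0; last by [].
  rewrite -(permKV sigma l0); congr (sigma _); apply/val_inj => /=.
  have := mx_le S; rewrite -/(rk l0) e0 ek; lia.
have := ltn_ord k; lia.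
Qed.

Lemma ncfc0 b0 beta A : ncfc b0 beta A set0 = b0 + A 0%N * G beta A 0.
Proof.
rewrite /ncfc eqxx bitT mul1r /G mulr_sumr; congr (_ + _).
rewrite [RHS](eq_bigl predT) //; apply: eq_bigr => k _.
rewrite sub0set bitT mul1r mulrCA; congr (_ * _).
rewrite (bigD1 ord0) /=; last by rewrite in_set0.
congr (_ * _).
by apply: eq_bigl => j; rewrite inE /= -val_eqE /=; have := ltn_ord j; lia.
Qed.

Lemma key_sub (J : {set 'I_n}) (k : 'I_n) T :
  ([set sigma j | j in J] \subset T) && ([set sigma j | j in J] \subset pre k) =
  [forall j in J, (j <= k)%N && (sigma j \in T)].
Proof.
apply/andP/forall_inP => [[s1 s2] j jJ | H].
  have sJ : sigma j \in [set sigma j | j in J] by apply: imset_f.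
  by rewrite (subsetP s1 _ sJ) andbT -in_pre (subsetP s2 _ sJ).
split; apply/subsetP => l /imsetP [j jJ ->]; have /andP[h1 h3] := H j jJ => //.
by rewrite in_pre.
Qed.

Lemma expand (A : nat -> R) (k : 'I_n) T :
  \sum_(S : {set 'I_n} | S \subset T) (bit R (S \subset pre k) *
      \prod_(j : 'I_n | (j <= k)%N && (sigma j \notin S)) A j)
  = \prod_(j : 'I_n | (j <= k)%N) (bit R (sigma j \in T) + A j).
Proof.
rewrite big_mkcond /=.
rewrite (reindex_inj (imset_inj (@perm_inj _ sigma))) /=.
rewrite [RHS]big_mkcond /=.
rewrite (eq_bigr (fun j : 'I_n => (if (j <= k)%N then bit R (sigma j \in T) else 0) +
     (if (j <= k)%N then A j else 1))); last first.
  by move=> j _; case: ifP; rewrite ?addr0 ?add0r.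
rewrite bigA_distr /=.
apply: eq_bigr => J _.
rewrite [RHS](bigID (fun j : 'I_n => j \in J)) /=.
rewrite [X in _ = X * _](eq_bigr (fun j : 'I_n => bit R ((j <= k)%N && (sigma j \in T)))); last first.
  by move=> j jJ; rewrite jJ; case: (j <= k)%N; rewrite ?bitF.
rewrite bit_prod.
rewrite [X in _ = _ * X](eq_bigr (fun j : 'I_n => if (j <= k)%N then A j else 1)); last first.
  by move=> j /negbTE ->.
rewrite -big_mkcondr /=.
rewrite [X in if _ then _ * X else _](eq_bigl (fun j : 'I_n => (j <= k)%N && (j \notin J))); last first.
  by move=> j; rewrite (mem_imset _ _ (@perm_inj _ sigma)).
rewrite [X in _ = _ * X](eq_bigl (fun j : 'I_n => (j <= k)%N && (j \notin J))); last first.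
  by move=> j; rewrite andbC.
rewrite -key_sub; case: ifP => HT; rewrite ?bitF ?mul0r //.
Qed.

Lemma ncfc_val b0 beta A T :
  \sum_(S : {set 'I_n} | S \subset T) ncfc b0 beta A S =
  b0 + \sum_(k : 'I_n) beta k * \prod_(j : 'I_n | (j <= k)%N) (bit R (sigma j \in T) + A j).
Proof.
rewrite /ncfc big_split /=; congr (_ + _).
  rewrite (bigD1 set0) ?sub0set //= eqxx bitT mul1r big1 ?addr0 //.
  by move=> S /andP[_ /negbTE ->]; rewrite bitF mul0r.
rewrite exchange_big /=; apply: eq_bigr => k _.
by rewrite -mulr_sumr expand.
Qed.

Lemma lt_co S (k : 'I_n) : S != set0 -> sigma k \in pre (mx S) :\: S -> (k < n')%N.
Proof.
move=> nS; rewrite !inE -/(rk _) rk_sigma => /andP[kS hk].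
have [l0 l0S e0] := mx_arg nS.
have : k != n' :> nat.
  apply/eqP => ek; move: kS; apply/negP; rewrite negbK.
  have -> : sigma k = l0; last by [].
  rewrite -(permKV sigma l0); congr (sigma _); apply/val_inj => /=.
  have := mx_le S; rewrite -/(rk l0) e0 ek; lia.
have := ltn_ord k; lia.
Qed.

Lemma prod_hit (x : 'I_n -> bool) (aN : nat -> bool) (kst : nat) (k : 'I_n) :
  (forall j : 'I_n, (j < kst)%N -> x (sigma j) != aN j) ->
  ((kst < n)%N -> x (sigma (inord kst)) = aN kst) ->
  \prod_(j : 'I_n | (j <= k)%N) bit R (x (sigma j) != aN j) = bit R (k < kst)%N.
Proof.
move=> H1 H2; case: (ltnP k kst) => hk.
  by rewrite bitT big1 // => j hj; rewrite H1 ?bitT //; apply: leq_ltn_trans hk.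
have hkn : (kst < n)%N by apply: leq_ltn_trans hk (ltn_ord k).
rewrite bitF (bigD1 (inord kst)) /=; last by rewrite inordK.
by rewrite inordK // H2 // eqxx bitF mul0r.
Qed.

Lemma val_sum b0 (beta : nat -> R) (x : 'I_n -> bool) (aN : nat -> bool) (kst : nat) :
  (forall j : 'I_n, (j < kst)%N -> x (sigma j) != aN j) ->
  ((kst < n)%N -> x (sigma (inord kst)) = aN kst) ->
  b0 + \sum_(k : 'I_n) beta k * \prod_(j : 'I_n | (j <= k)%N) bit R (x (sigma j) != aN j)
  = b0 + \sum_(k : 'I_n | (k < kst)%N) beta k.
Proof.
move=> H1 H2; congr (_ + _); rewrite [RHS]big_mkcond; apply: eq_bigr => k _.
by rewrite (prod_hit k H1 H2); case: ifP; rewrite ?bitT ?bitF ?mulr1 ?mulr0.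
Qed.

Lemma tele (f : nat -> R) m : (m <= n')%N ->
  \sum_(k : 'I_n | (k < m)%N) (if (k < n')%N then f k + f k.+1 else 1) = f 0%N + f m.
Proof.
elim: m => [|m IH] hm.
  by rewrite big_pred0 // (add_same h2).
rewrite (bigD1 (inord m)) /=; last by rewrite inordK //; lia.
rewrite inordK; last by lia.
rewrite ifT; last by lia.
rewrite (eq_bigl (fun k : 'I_n => (k < m)%N)); last first.
  by move=> k; rewrite -val_eqE /= inordK; lia.
rewrite IH; last by lia.
by rewrite addrCA [f m + _ + _]addrAC (add_same h2) add0r.
Qed.

Lemma tele_full (f : nat -> R) :
  \sum_(k : 'I_n) (if (k < n')%N then f k + f k.+1 else 1) = f 0%N + f n' + 1.
Proof.
rewrite (bigD1 ord_max) //= ltnn addrC; congr (_ + _).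
rewrite -(tele f (leqnn n')); apply: eq_bigl => k; rewrite -val_eqE /=.
have := ltn_ord k; lia.
Qed.

Lemma neq_addb (u v : bool) : (u != v) = u (+) v.
Proof. by case: u; case: v. Qed.

Lemma ncf_to_good (c : {ffun {set 'I_n} -> bool}) (a b : 'I_n -> bool) :
  (forall x : 'I_n -> bool,
      (forall k : 'I_n,
          (forall k' : 'I_n, (k' < k)%N -> x (sigma k') != a k') ->
          x (sigma k) = a k -> bpoly_eval c x = b k) /\
      ((forall k : 'I_n, x (sigma k) != a k) ->
          forall k : 'I_n, val k = n.-1 -> bpoly_eval c x = ~~ b k)) ->
  goodb R sigma c.
Proof.
move=> H.
pose aN := fun j : nat => a (inord j).
pose bN := fun j : nat => b (inord j).
pose b0 := bit R (bN 0%N).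
pose beta := fun k : nat => if (k < n')%N then bit R (bN k) + bit R (bN k.+1) else 1.
pose A := fun j : nat => bit R (aN j).
have hb : beta n' = 1 by rewrite /beta ltnn.
have hval : forall x, bit R (bpoly_eval c x) =
    b0 + \sum_(k : 'I_n) beta k * \prod_(j : 'I_n | (j <= k)%N) bit R (x (sigma j) != aN j).
  move=> x; have [H1 H2] := H x.
  case: (boolP [exists j : 'I_n, x (sigma j) == a j]).
    case/existsP => j0 hj0.
    have exP : exists m, (m < n)%N && (x (sigma (inord m)) == a (inord m)).
      by exists j0; rewrite inord_val ltn_ord.
    case: (ex_minnP exP) => kst /andP[hk /eqP hxk] hmin.
    rewrite (@val_sum _ _ _ _ kst); first last.
    - by move=> _; rewrite hxk.
    - move=> j hj; apply/negP => /eqP e.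
      have := hmin j; rewrite inord_val ltn_ord e /aN inord_val eqxx => /(_ isT).
      by rewrite leqNgt hj.
    rewrite /beta (tele (fun k => bit R (bN k))); last by lia.
    rewrite /b0 addrA (add_same h2) add0r.
    congr (bit R _); rewrite /bN -(H1 (inord kst)) //.
    move=> k' hk'; apply/negP => /eqP e.
    have := hmin k'; rewrite inord_val ltn_ord e eqxx => /(_ isT).
    by rewrite leqNgt (leq_trans hk') // inordK.
  rewrite negb_exists => /forallP hno.
  rewrite (@val_sum _ _ _ _ n); first last.
  - by rewrite ltnn.
  - by move=> j _; rewrite /aN inord_val; apply: hno.
  rewrite (eq_bigl predT); last by move=> k; rewrite ltn_ord.
  rewrite /beta (tele_full (fun k => bit R (bN k))) /b0 !addrA (add_same h2) add0r.
  rewrite (H2 hno ord_max) //.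
  rewrite (bit_negb h2) addrC /bN; congr (_ + bit R (b _)); by apply: val_inj; rewrite /= inordK.
have hc : forall S, bit R (c S) = ncfc b0 beta A S.
  apply: mobius_uniq => T.
  have := bpoly_bit h2 c (fun l => l \in T).
  rewrite (_ : [set l | l \in T] = T); last by apply/setP => l; rewrite inE.
  move=> <-; rewrite hval ncfc_val; congr (_ + _); apply: eq_bigr => k _.
  congr (_ * _); apply: eq_bigr => j _; by rewrite neq_addb (bit_addb h2).
apply/andP; split.
  by apply: (@bit_inj R); rewrite hc ncfc_top // bitT.
apply/forallP => S; apply/implyP => _; apply/eqP.
rewrite hc (ncfc_rec _ _ _ hb) hc; congr (_ * _); apply: eq_bigr => k _.
by rewrite hc.
Qed.

Lemma good_to_ncf (c : {ffun {set 'I_n} -> bool}) :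
  goodb R sigma c -> nested_canalyzing (bpoly_eval c).
Proof.
case/andP => cT /forallP Hrec.
split; first exact: (all_vars h2 cT).
pose aN := fun j : nat => if (j < n')%N then c (setT :\ sigma (inord j)) else false.
pose betaN := fun k : nat =>
  if (k < n')%N then c (pre k) (+) (aN k.+1 && c (pre k.+1)) else true.
pose b0N := c set0 (+) (aN 0%N && c (pre 0)).
pose A := fun j => bit R (aN j).
pose beta := fun k => bit R (betaN k).
pose b0 := bit R b0N.
have hb : beta n' = 1 by rewrite /beta /betaN ltnn bitT.
have hG : forall m, (m <= n')%N -> G beta A m = bit R (c (pre m)).
  suff H : forall d, (d <= n')%N -> G beta A (n' - d)%N = bit R (c (pre (n' - d)%N)).
    by move=> m hm; have := H (n' - m)%N (leq_subr _ _); rewrite subKn.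
  elim=> [|d IH] hd.
    by rewrite subn0 G_top hb pre_top cT bitT.
  rewrite G_rec; last by lia.
  have -> : (n' - d.+1)%N.+1 = (n' - d)%N by lia.
  rewrite IH; last by lia.
  rewrite /beta /betaN ifT; last by lia.
  have -> : (n' - d.+1)%N.+1 = (n' - d)%N by lia.
  by rewrite (bit_addb h2) bit_andb -addrA (add_same h2) addr0.
have hc : forall S, bit R (c S) = ncfc b0 beta A S.
  move=> S; case: (eqVneq S set0) => [->|nS].
    rewrite ncfc0 hG // /b0 /b0N (bit_addb h2) bit_andb -addrA (add_same h2) addr0.
    by [].
  case: (eqVneq S setT) => [->|nT].
    by rewrite ncfc_top // cT bitT.
  have := Hrec S; rewrite nT /= => /eqP ->.
  rewrite (ncfc_rec _ _ _ hb) completionE // ncfc_pre ?mx_le // hG ?mx_le //.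
  congr (_ * _); apply: eq_bigr => k hk.
  have hk' := lt_co nS hk.
  rewrite ncfc_co // hb mul1r /A /aN hk' inord_val.
  by [].
have hval : forall x, bit R (bpoly_eval c x) =
    b0 + \sum_(k : 'I_n) beta k * \prod_(j : 'I_n | (j <= k)%N) bit R (x (sigma j) != aN j).
  move=> x; rewrite (bpoly_bit h2) (eq_bigr _ (fun S _ => hc S)) ncfc_val.
  congr (_ + _); apply: eq_bigr => k _; congr (_ * _); apply: eq_bigr => j _.
  by rewrite inE neq_addb (bit_addb h2).
pose bN := fun k : nat => b0N (+) \big[addb/false]_(j : 'I_n | (j < k)%N) betaN j.
exists sigma, (fun j : 'I_n => aN j), (fun k : 'I_n => bN k) => x; split.
  move=> k H1 H2; apply: (@bit_inj R).
  rewrite hval (@val_sum _ _ _ _ k) //; last by rewrite inord_val.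
  by rewrite /bN (bit_addb h2) (bit_sum h2).
move=> Hno k hk; apply: (@bit_inj R).
rewrite hval (@val_sum _ _ _ _ n) //; last by rewrite ltnn.
rewrite (bit_negb h2) /bN (bit_addb h2) (bit_sum h2) (bigD1 ord_max) //= hb.
rewrite (eq_bigl (fun j : 'I_n => (j < k)%N)); last first.
  by move=> j; rewrite -val_eqE /= hk /=; have := ltn_ord j; lia.
by rewrite addrCA.
Qed.

End NCF.

Section Phi.
Context (n : nat).
Local Notation R := (cring n).

Lemma cring_char2 : (2%:R : R) = 0.
Proof. by rewrite -(rmorph_nat (@mpolyC _ F2bar)) F2bar_char2 rmorph0. Qed.

Definition vT (T : {set 'I_n}) : 'I_n -> R := fun e => bit R (e \in T).

Lemma bitXn (b : bool) k : bit R b ^+ k = bit R ((k != 0)%N ==> b).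
Proof.
case: k => [|k]; first by rewrite expr0 bitT.
by case: b; rewrite /= ?bitT ?bitF ?expr1n ?expr0n.
Qed.

Lemma eval_red (P : xring n) T :
  P.@[vT T] = \sum_(S : {set 'I_n} | S \subset T) red_coef S P.
Proof.
rewrite mevalE /red_coef.
rewrite (eq_bigr (fun S => \sum_(m <- msupp P) if [set l | (m l != 0)%N] == S then P@_m else 0));
  last by move=> S _; rewrite big_mkcond.
rewrite exchange_big /=; apply: eq_bigr => m _.
rewrite (eq_bigr (fun i => bit R ((m i != 0)%N ==> (i \in T)))); last by move=> i _; rewrite bitXn.
rewrite bit_prod.
have -> : [forall i, (m i != 0)%N ==> (i \in T)] = ([set l | (m l != 0)%N] \subset T).
  apply/forallP/subsetP => H l; first by rewrite inE => hl; have := H l; rewrite hl.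
  by apply/implyP => hl; apply: H; rewrite inE.
case: (boolP ([set l | (m l != 0)%N] \subset T)) => hs.
  rewrite bitT mulr1 (bigD1 [set l | (m l != 0)%N]) //= eqxx big1 ?addr0 //.
  by move=> S /andP[_ /negbTE]; rewrite eq_sym => ->.
rewrite bitF mulr0 big1 // => S hS; case: eqP => // e; by move: hs; rewrite e hS.
Qed.

Definition matchb (T : {set 'I_n}) (x : 'I_n -> bool) := [forall e, (e \in T) == x e].

Lemma eval_delta (x : 'I_n -> bool) T : (delta x).@[vT T] = bit R (matchb T x).
Proof.
rewrite /delta /matchb rmorph_prod /= -bit_prod_all; apply: eq_bigr => e _.
rewrite rmorphB rmorph1 rmorphB /= mevalXU /bit rmorph_nat.
exact: (bit_eq cring_char2).
Qed.

Lemma eval_f r (s t : 'I_r -> 'I_n -> bool) i T :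
  (f_data s t i).@[vT T] = \sum_(j < r) bit R (t j i) * bit R (matchb T (s j)).
Proof.
rewrite /f_data rmorph_sum; apply: eq_bigr => j _.
by rewrite rmorphM /= eval_delta /bit rmorph_nat.
Qed.

Lemma eval_p r (s : 'I_r -> 'I_n -> bool) T :
  (p_data s).@[vT T] = \prod_(j < r) (1 - bit R (matchb T (s j))).
Proof.
rewrite /p_data rmorph_prod; apply: eq_bigr => j _.
by rewrite rmorphB rmorph1 /= eval_delta.
Qed.

Lemma eval_gb T : (generic_b n).@[vT T] = \sum_(H : {set 'I_n} | H \subset T) var H.
Proof.
rewrite /generic_b rmorph_sum [RHS]big_mkcond; apply: eq_bigr => H _.
rewrite rmorphM /= mevalC rmorph_prod /=.
rewrite (eq_bigr (fun l => bit R (l \in T))); last by move=> l _; rewrite mevalXU.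
rewrite bit_prod.
have -> : [forall (l | l \in H), l \in T] = (H \subset T).
  by apply/forall_inP/subsetP.
by case: ifP; rewrite ?bitT ?bitF ?mulr1 ?mulr0.
Qed.

Lemma matchb_inj r (s : 'I_r -> 'I_n -> bool) T j1 j2 : injective s ->
  matchb T (s j1) -> matchb T (s j2) -> j1 = j2.
Proof.
move=> si /forallP H1 /forallP H2; apply: si; apply: functional_extensionality => e.
by have := H1 e; have := H2 e; do 2 move/eqP <-.
Qed.

Lemma sum_match r (s : 'I_r -> 'I_n -> bool) (F : 'I_r -> R) T j0 :
  injective s -> matchb T (s j0) ->
  \sum_(j < r) F j * bit R (matchb T (s j)) = F j0.
Proof.
move=> si hm; rewrite (bigD1 j0) //= hm bitT mulr1 big1 ?addr0 // => j nj.
case: (boolP (matchb T (s j))) => h; last by rewrite bitF mulr0.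
by case/eqP: nj; apply: (matchb_inj si h hm).
Qed.

Lemma prod_match r (s : 'I_r -> 'I_n -> bool) T j0 :
  matchb T (s j0) -> \prod_(j < r) (1 - bit R (matchb T (s j))) = 0.
Proof. by move=> hm; rewrite (bigD1 j0) //= hm bitT subrr mul0r. Qed.

Lemma meval_mmap (g : 'I_(nsub n) -> R) (v : 'I_(nsub n) -> F2bar) (q : R) :
  (mmap (@mpolyC _ F2bar) g q).@[v] = q.@[fun k => (g k).@[v]].
Proof.
rewrite /mmap rmorph_sum mevalE; apply: eq_bigr => m _.
rewrite rmorphM /= mevalC /mmap1 rmorph_prod; congr (_ * _); apply: eq_bigr => k _.
by rewrite rmorphXn.
Qed.

End Phi.

Definition pt (n : nat) (c : {ffun {set 'I_n} -> bool}) : 'I_(nsub n) -> F2bar :=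
  fun k => bit F2bar (c (enum_val k)).

Section Ideal.
Context (n : nat).

Lemma eval_var (c : {ffun {set 'I_n} -> bool}) S : (var S).@[pt c] = bit F2bar (c S).
Proof. by rewrite /var mevalXU /pt enum_rankK. Qed.

Lemma eval_bitc (c : {ffun {set 'I_n} -> bool}) b : (bit (cring n) b).@[pt c] = bit F2bar b.
Proof. by rewrite /bit rmorph_nat. Qed.

Lemma eval_gen (sigma : {perm 'I_n}) c S :
  (Isigma_gen sigma S).@[pt c] = bit F2bar (c S) - bit F2bar (c (completion sigma S)) *
    \prod_(k : 'I_n | sigma k \in completion sigma S :\: S) bit F2bar (c (setT :\ sigma k)).
Proof.
rewrite /Isigma_gen rmorphB rmorphM rmorph_prod /= !eval_var; congr (_ - _ * _).
by apply: eq_bigr => k _; rewrite eval_var.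
Qed.

Lemma good_vanish (sigma : {perm 'I_n}) c q :
  goodb F2bar sigma c -> in_Isigma sigma q -> q.@[pt c] = 0.
Proof.
case/andP => cT /forallP H [coef ->].
rewrite rmorphD rmorphM rmorphB rmorph1 /= eval_var cT bitT subrr mulr0 add0r.
rewrite rmorph_sum big1 // => S hS; rewrite rmorphM /= eval_gen.
by have := H S; rewrite hS /= => /eqP ->; rewrite subrr mulr0.
Qed.

Lemma ideal_mul (sigma : {perm 'I_n}) g h : in_Isigma sigma g -> in_Isigma sigma (h * g).
Proof.
case=> coef ->; exists (fun o => h * coef o).
by rewrite mulrDr mulr_sumr mulrA; congr (_ + _); apply: eq_bigr => S _; rewrite mulrA.
Qed.

Lemma bad_gen (sigma : {perm 'I_n}) c : ~~ goodb F2bar sigma c ->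
  exists g, in_Isigma sigma g /\ g.@[pt c] != 0.
Proof.
rewrite negb_and => /orP [hT | /forallPn [S]].
  exists (var setT - 1); split.
    exists (fun o => if o is None then 1 else 0).
    by rewrite mul1r big1 ?addr0 // => S _; rewrite mul0r.
  by rewrite rmorphB rmorph1 /= eval_var (negbTE hT) bitF sub0r oppr_eq0 oner_eq0.
rewrite negb_imply => /andP[nT hne].
exists (Isigma_gen sigma S); split.
  exists (fun o => if o is Some S' then (S' == S)%:R else 0).
  rewrite mul0r add0r (bigD1 S) //= eqxx mul1r big1 ?addr0 // => S' /andP[_ nS'].
  by rewrite (negbTE nS') mul0r.
by rewrite eval_gen subr_eq0.
Qed.

End Ideal.

Section Main.
Context (n r : nat) (s t : 'I_r -> 'I_n -> bool) (i : 'I_n) (si : injective s).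

Lemma sumW (T : {set 'I_n}) : \sum_(S : {set 'I_n} | S \subset T) W_poly s t i S =
  (f_data s t i + generic_b n * p_data s).@[vT T].
Proof. by rewrite eval_red. Qed.

Lemma Phi_var S : Phi s t i (var S) = W_poly s t i S.
Proof. by rewrite /Phi /var mmapX mmap1U enum_rankK. Qed.

Lemma match_self j : matchb [set e | s j e] (s j).
Proof. by apply/forallP => e; rewrite inE. Qed.

Lemma Phi_L j :
  Phi s t i (\sum_(S : {set 'I_n} | S \subset [set e | s j e]) var S - bit _ (t j i)) = 0.
Proof.
rewrite /Phi rmorphB rmorph_sum /=.
rewrite (eq_bigr (fun S => W_poly s t i S)); last by move=> S _; exact: Phi_var.
rewrite sumW rmorphD rmorphM /= eval_f eval_p.
rewrite (sum_match (fun j => bit _ (t j i)) si (match_self j)) (prod_match (match_self j)).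
by rewrite mulr0 addr0 /bit rmorph_nat subrr.
Qed.

Lemma in_J_IV q : in_IVncf q -> in_J s t i q.
Proof. by move=> H; exists q, 0; rewrite addr0 /Phi raddf0. Qed.

Lemma in_J_ker q : Phi s t i q = 0 -> in_J s t i q.
Proof.
move=> H; exists 0, q; rewrite add0r; split => //; split => // sigma.
by exists (fun _ => 0); rewrite mul0r add0r big1 // => S _; rewrite mul0r.
Qed.

Lemma fit_of (c : {ffun {set 'I_n} -> bool}) : F2_point_in_V (in_J s t i) c ->
  forall j, bpoly_eval c (s j) = t j i.
Proof.
move=> HV j; have := HV _ (in_J_ker (Phi_L j)).
rewrite rmorphB rmorph_sum /= eval_bitc.
rewrite (eq_bigr (fun S => bit F2bar (c S))); last by move=> S _; rewrite eval_var.
rewrite -bpoly_bit; last exact: F2bar_char2.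
by move/eqP; rewrite subr_eq0 => /eqP /(@bit_inj F2bar).
Qed.

Lemma exists_good (c : {ffun {set 'I_n} -> bool}) : F2_point_in_V (in_J s t i) c ->
  exists sigma, goodb F2bar sigma c.
Proof.
move=> HV; case: (boolP [exists sigma, goodb F2bar sigma c]) => [/existsP //|].
rewrite negb_exists => /forallP Hb.
have : forall sigma : {perm 'I_n}, exists g, in_Isigma sigma g /\ g.@[pt c] != 0.
  by move=> sigma; apply: bad_gen; apply: Hb.
case/fin_all_exists => g Hg.
have Hin : in_J s t i (\prod_sigma g sigma).
  apply: in_J_IV => sigma; rewrite (bigD1 sigma) //= mulrC; apply: ideal_mul.
  exact: (proj1 (Hg sigma)).
exfalso; move: (HV _ Hin); rewrite rmorph_prod /= => /eqP; apply/negP.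
by apply/prodf_neq0 => sigma _; exact: (proj2 (Hg sigma)).
Qed.

Lemma W_eval (c : {ffun {set 'I_n} -> bool}) : (forall j, bpoly_eval c (s j) = t j i) ->
  forall S, (W_poly s t i S).@[pt c] = bit F2bar (c S).
Proof.
move=> fit.
apply: (@mobius_uniq F2bar n (fun S => (W_poly s t i S).@[pt c]) (fun S => bit F2bar (c S))) => T.
transitivity ((\sum_(S : {set 'I_n} | S \subset T) W_poly s t i S).@[pt c]).
  by rewrite rmorph_sum.
rewrite sumW rmorphD rmorphM /= eval_f eval_p eval_gb.
case: (boolP [exists j, matchb T (s j)]) => [/existsP [j0 hm]|].
  rewrite (sum_match (fun j => bit _ (t j i)) si hm) (prod_match hm) mulr0 addr0 eval_bitc.
  have hb : \sum_(S : {set 'I_n} | S \subset T) bit F2bar (c S) =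
            bit F2bar (bpoly_eval c (fun l => l \in T)).
    rewrite (bpoly_bit F2bar_char2) (_ : [set l | l \in T] = T) //.
    by apply/setP => l; rewrite inE.
  rewrite hb -(fit j0); congr (bit _ _); apply: bpoly_ext => e.
  by move/forallP: hm => /(_ e) /eqP ->.
rewrite negb_exists => /forallP hn.
have e1 : \sum_(j < r) bit (cring n) (t j i) * bit (cring n) (matchb T (s j)) = 0.
  by apply: big1 => j _; rewrite (negbTE (hn j)) bitF mulr0.
have e2 : \prod_(j < r) (1 - bit (cring n) (matchb T (s j))) = 1.
  by apply: big1 => j _; rewrite (negbTE (hn j)) bitF subr0.
rewrite e1 e2 add0r mulr1.
by rewrite rmorph_sum; apply: eq_bigr => H _; exact: eval_var.
Qed.

End Main.

Local Close Scope ring_scope.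

Theorem mainTheorem2 (n r : nat) (s t : 'I_r -> 'I_n -> bool) (i : 'I_n) :
  (0 < n)%N -> (0 < r)%N -> injective s ->
  forall c : {ffun {set 'I_n} -> bool},
    F2_point_in_V (in_J s t i) c <->
    (nested_canalyzing (bpoly_eval c) /\
     forall j : 'I_r, bpoly_eval c (s j) = t j i).
Proof.
case: n s t i => [s t i //|n' s t i _ _ si c]; split.
  move=> HV; split; last exact: fit_of HV.
  have [sigma g] := exists_good HV.
  exact: (good_to_ncf F2bar_char2 g).
case=> [[_ [sigma [a [b H]]]] fit] q [q1 [q2 [-> [H1 H2]]]].
rewrite rmorphD /=.
rewrite (good_vanish (ncf_to_good F2bar_char2 H) (H1 sigma)) add0r.
have -> : q2.@[fun k => bit F2bar (c (enum_val k))] =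
          q2.@[fun k => (W_poly s t i (enum_val k)).@[pt c]].
  by apply: meval_eq => k; rewrite (W_eval si fit).
by rewrite -meval_mmap -/(Phi s t i q2) H2 meval0.
Qed.
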